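(* Let $p\geq 2$ be an even integer and let $U_p=\bigcup_{n\in 2\mathbb Z_+}\mathbb Z_p^n$. Let $\boldsymbol a,\boldsymbol b\in U_p$ be equivalent (in the sense defined in the context). Then $\varepsilon_p(\boldsymbol a)=\varepsilon_p(\boldsymbol b)$.
   Context: $\mathbb Z_+$ denotes the positive integers and $\mathbb Z_p=\mathbb Z/p\mathbb Z$. Two elements of $U_p$ are called equivalent if they are related by a finite sequence of the following transformations of $(a_1,\ldots,a_n)\in\mathbb Z_p^n$ ($n$ even): (Op1) $(a_1,\ldots,a_n)\to(a_2,\ldots,a_n,a_1)$; (Op2) $(a_1,\ldots,a_n)\to(a, a_2+(-1)^2(a_1-a),\ldots,a_i+(-1)^i(a_1-a),\ldots,a_n+(-1)^n(a_1-a))$ for any $a\in\mathbb Z_p$; (Op3) $(a_1,\ldots,a_n)\to(a, a_1-a_2+a,\ldots,a_1-a_i+a,\ldots,a_1-a_n+a)$ for any $a\in\mathbb Z_p$; (Op4) $(a_1,\ldots,a_n)\to(a_1,-a_1+a_2+a_3,a_3,\ldots,a_n)$ when $n>3$. For $p$ even, parity of elements of $\mathbb Z_p$ is well defined, and $\varepsilon_p:U_p\to\mathbb Z\cup\{\infty\}$ is defined by $\varepsilon_p(a_1,\ldots,a_n)=0$ if $a_1+a_2\equiv a_2+a_3\equiv\cdots\equiv a_n+a_1\equiv 0\pmod 2$, $=1$ if $a_1+a_2\equiv\cdots\equiv a_n+a_1\equiv 1\pmod 2$, and $=\infty$ otherwise. *)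

(* Defs.v *)
From mathcomp Require Import all_boot all_algebra.
From Stdlib Require Import Relations.
Set Implicit Arguments. Unset Strict Implicit. Unset Printing Implicit Defensive.
Import GRing.Theory.
Local Open Scope ring_scope.

Definition inU (p : nat) (s : seq 'Z_p) : bool :=
  (0 < size s)%N && ~~ odd (size s).

Definition op1 (p : nat) (s : seq 'Z_p) : seq 'Z_p := rot 1 s.

(* Op2: a_i -> a_i + (-1)^i (a1 - a) (1-based i); for i = 1 this gives a. *)
Definition op2 (p : nat) (a : 'Z_p) (s : seq 'Z_p) : seq 'Z_p :=
  [seq nth 0 s i + (-1) ^+ i.+1 * (nth 0 s 0 - a) | i <- iota 0 (size s)].

Definition op3 (p : nat) (a : 'Z_p) (s : seq 'Z_p) : seq 'Z_p :=
  [seq nth 0 s 0 - x + a | x <- s].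

Definition op4 (p : nat) (s : seq 'Z_p) : seq 'Z_p :=
  match s with
  | a1 :: a2 :: a3 :: r => a1 :: (- a1 + a2 + a3) :: a3 :: r
  | _ => s
  end.

Definition step (p : nat) (s t : seq 'Z_p) : Prop :=
  t = op1 s \/ (exists a, t = op2 a s) \/ (exists a, t = op3 a s)
  \/ ((3 < size s)%N /\ t = op4 s).

(* Equivalence: related by a finite sequence of transformations
   (equivalence closure; the transformations are invertible anyway). *)
Definition equivalent (p : nat) (s t : seq 'Z_p) : Prop :=
  clos_refl_sym_trans (seq 'Z_p) (@step p) s t.

(* parity of an element of Z_p (well defined for p even) *)
Definition parity (p : nat) (x : 'Z_p) : nat := (val x %% 2)%N.

Definition cpairs (p : nat) (s : seq 'Z_p) : seq ('Z_p * 'Z_p) := zip s (rot 1 s).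

(* epsilon_p with values in Z ∪ {∞}: Some k = k, None = ∞ *)
Definition eps (p : nat) (s : seq 'Z_p) : option int :=
  if all (fun xy => (parity xy.1 + parity xy.2) %% 2 == 0)%N (cpairs s) then Some 0%Z
  else if all (fun xy => (parity xy.1 + parity xy.2) %% 2 == 1)%N (cpairs s) then Some 1%Z
  else None.

(* Main.v *)
Require Import Defs.
From mathcomp Require Import all_boot all_algebra.
From mathcomp Require Import zify.
From Stdlib Require Import Relations.
Import GRing.Theory.

Section Aux.
Variable p : nat.
Hypothesis hp2 : (2 <= p)%N.
Hypothesis hpeven : ~~ odd p.

Lemma par_lt2 (x : 'Z_p) : (parity x < 2)%N.
Proof. by rewrite /parity ltn_mod. Qed.

Lemma par_add (x y : 'Z_p) : parity (x + y)%R = ((parity x + parity y) %% 2)%N.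
Proof.
rewrite /parity.
have -> : val (x + y)%R = ((val x + val y) %% (Zp_trunc p).+2)%N by [].
have hc := Zp_cast (p:=p) hp2.
move: (val x) (val y) => u v.
rewrite hc modn_dvdm; last by rewrite dvdn2.
by rewrite modnDm.
Qed.

Lemma par_opp (x : 'Z_p) : parity (- x)%R = parity x.
Proof.
have h := par_add x (- x)%R.
rewrite GRing.subrr in h.
have h0 : parity (0%R : 'Z_p) = 0%N by [].
move: (par_lt2 x) (par_lt2 (- x)%R).
move: h; rewrite h0 /parity; lia.
Qed.

Lemma par_sign k (x : 'Z_p) : parity ((-1) ^+ k * x)%R = parity x.
Proof.
elim: k => [|k IH]; first by rewrite expr0 mul1r.
by rewrite exprS -mulrA mulN1r par_opp.
Qed.




Definition g (l : seq nat) : seq nat :=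
  [seq ((x.1 + x.2) %% 2)%N | x <- zip l (rot 1 l)].

Definition F (l : seq nat) : option int :=
  if all (fun q => q == 0%N) l then Some 0%Z
  else if all (fun q => q == 1%N) l then Some 1%Z else None.

Lemma zip_map2 (A B : Type) (f : A -> B) (s t : seq A) :
  zip (map f s) (map f t) = map (fun xy => (f xy.1, f xy.2)) (zip s t).
Proof. by elim: s t => [|x s IH] [|y t] //=; rewrite IH. Qed.

Lemma epsE (s : seq 'Z_p) : eps s = F (g (map (@parity p) s)).
Proof.
rewrite /eps /F /g /cpairs -map_rot zip_map2 -map_comp !all_map.
done.
Qed.

Lemma rot1_zip (A B : Type) (s : seq A) (t : seq B) :
  size s = size t -> rot 1 (zip s t) = zip (rot 1 s) (rot 1 t).
Proof.
case: s => [|x s]; case: t => [|y t] //= [] hs.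
by rewrite !rot1_cons zip_rcons.
Qed.

Lemma g_rot l : g (rot 1 l) = rot 1 (g l).
Proof. by rewrite /g -map_rot rot1_zip ?size_rot. Qed.

Lemma g_shift c l : g (map (fun q => ((q + c) %% 2)%N) l) = g l.
Proof.
rewrite /g -map_rot zip_map2 -map_comp; apply: eq_map => -[x y] /=; lia.
Qed.

Lemma step_perm (s t : seq 'Z_p) : step s t ->
  perm_eq (g (map (@parity p) s)) (g (map (@parity p) t)).
Proof.
case=> [->|[[a ->]|[[a ->]|[hs ->]]]].
- by rewrite /op1 map_rot g_rot perm_sym perm_rot.
- have -> : map (@parity p) (op2 a s) =
    map (fun q => ((q + parity (nth 0%R s 0 - a)%R) %% 2)%N) (map (@parity p) s).
    rewrite /op2 -[in RHS](mkseq_nth 0%R s) /mkseq -!map_comp; apply: eq_map => i /=.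
    idtac.
    by rewrite par_add par_sign -/(mkseq (nth 0%R s) (size s)) mkseq_nth.
  by rewrite g_shift.
- have -> : map (@parity p) (op3 a s) =
    map (fun q => ((q + (parity (nth 0%R s 0) + parity a)) %% 2)%N) (map (@parity p) s).
    rewrite /op3 -!map_comp; apply: eq_map => x /=.
    rewrite !par_add par_opp; lia.
  by rewrite g_shift.
- case: s hs => [|a1 [|a2 [|a3 r]]] //= _.
  rewrite /g /= !par_add par_opp.
  set q1 := parity a1; set q2 := parity a2; set q3 := parity a3.
  have e1 : ((q1 + ((q1 + q2) %% 2 + q3) %% 2) %% 2 = (q2 + q3) %% 2)%N by lia.
  have e2 : ((((q1 + q2) %% 2 + q3) %% 2 + q3) %% 2 = (q1 + q2) %% 2)%N by lia.
  rewrite e1 e2.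
  by rewrite (perm_catCA [:: _] [:: _] _).
Qed.

End Aux.

Theorem mainTheorem2 (p : nat) (hp2 : (2 <= p)%N) (hpeven : ~~ odd p)
  (a b : seq 'Z_p) (ha : inU a) (hb : inU b) (hab : equivalent a b) :
  eps a = eps b.
Proof.
rewrite !epsE //.
elim: hab {ha hb} => [x y st| x | x y _ IH | x y z _ IH1 _ IH2].
- have hp := @step_perm p hp2 hpeven _ _ st.
  by rewrite /F (perm_all _ hp) (perm_all (fun q => q == 1%N) hp).
- by [].
- by [].
- by rewrite IH1 IH2.
Qed.
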